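(* The cycle $C_5$ is $2$-adjustable, but $C_5$ admits no locally injective homomorphism to $\mathring{K}_3$.
   Context: $\mathring{K}_n$ denotes the complete graph on $n$ vertices with one loop added at a single vertex. A homomorphism $f:G\to H$ is a map $V(G)\to V(H)$ with $f(u)f(v)\in E(H)$ whenever $uv\in E(G)$; it is locally injective if for every vertex $v$, $f$ is injective on $N(v)$. An incidence of $G$ is a pair $(v,e)$ with $v\in e\in E(G)$; incidences $(v,e),(u,f)$ are adjacent if $v=u$, or $e=f$, or $vu\in\{e,f\}$; an incidence coloring gives adjacent incidences distinct colors. $S^0_c(v)=\{c(v,uv):uv\in E(G)\}$. An incidence coloring $c$ with palette $P$ is adjustable if there are two distinct colors $x,y\in P$ such that no vertex $v$ has $\{x,y\}\subseteq S^0_c(v)$. $G$ is $2$-adjustable if it admits an adjustable incidence coloring with palette of size $\Delta(G)+2$. *)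

(* Defs.v *)
From mathcomp Require Import all_boot.
Set Implicit Arguments. Unset Strict Implicit. Unset Printing Implicit Defensive.

Section Graphs.
Variables (V : finType) (G : rel V).
(* G is the adjacency relation of a (simple, for incidence colorings) graph. *)

Definition is_edge (e : {set V}) : bool :=
  [exists u : V, exists v : V, G u v && (e == [set u; v])].

Definition incidence (v : V) (e : {set V}) : bool := is_edge e && (v \in e).

Definition inc_adj (v : V) (e : {set V}) (u : V) (f : {set V}) : bool :=
  [|| v == u, e == f, [set v; u] == e | [set v; u] == f].

Definition incidence_coloring (k : nat) (c : V -> {set V} -> 'I_k) : Prop :=
  forall v e u f, incidence v e -> incidence u f -> (v, e) != (u, f) ->
    inc_adj v e u f -> c v e != c u f.

Definition S0 (k : nat) (c : V -> {set V} -> 'I_k) (v : V) : {set 'I_k} :=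
  [set c v e | e : {set V} in [set e : {set V} | incidence v e]].

Definition adjustable (k : nat) (c : V -> {set V} -> 'I_k) : Prop :=
  exists x y : 'I_k, x != y /\
    forall v : V, ~~ ((x \in S0 c v) && (y \in S0 c v)).

Definition maxdeg : nat := \max_(v : V) #|[set u | G v u]|.

Definition two_adjustable : Prop :=
  exists c : V -> {set V} -> 'I_(maxdeg + 2),
    incidence_coloring c /\ adjustable c.

Definition loc_inj_hom (W : finType) (H : rel W) (f : V -> W) : Prop :=
  (forall u v, G u v -> H (f u) (f v)) /\
  (forall v, {in [pred u | G v u] &, injective f}).
End Graphs.

Definition C5 : rel 'I_5 :=
  fun i j => (j == (i.+1 %% 5) :> nat) || (i == (j.+1 %% 5) :> nat).

Definition K3loop : rel 'I_3 :=
  fun i j => (i != j) || ((i == 0 :> nat) && (j == 0 :> nat)).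

(* Main.v *)
Require Import Defs.
From mathcomp Require Import all_boot.
Lemma eqs2 (T:finType)(x y a b:T): ([set x;y] == [set a;b]) = ((x==a)&&(y==b)) || ((x==b)&&(y==a)).
Proof.
apply/eqP/idP.
- move/setP=> H. move: (H x) (H y) (H a) (H b); rewrite !in_set2 !eqxx ?orbT /=.
  move=> Hx Hy /orP[/eqP ax|/eqP ay] /orP[/eqP bx|/eqP yb]; subst; move: Hx Hy;
  rewrite ?eqxx ?andbT ?orbT ?orbb //= => /eqP -> //= _; rewrite eqxx.
- by case/orP=> /andP[/eqP -> /eqP ->] //; rewrite setUC.
Qed.
Definition enum5 : seq 'I_5 := [:: @Ordinal 5 0 isT; @Ordinal 5 1 isT; @Ordinal 5 2 isT; @Ordinal 5 3 isT; @Ordinal 5 4 isT].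
Lemma enum5P (P : 'I_5 -> bool) : all P enum5 -> forall x, P x.
Proof. move=> /allP H x; apply: H; case: x => [[|[|[|[|[|m]]]]] Hm] //=. Qed.
Definition o5 : 'I_5 := @Ordinal 5 0 isT.
Definition o4 : 'I_4 := @Ordinal 4 0 isT.
Definition col4 : seq 'I_4 := [:: @Ordinal 4 0 isT; @Ordinal 4 1 isT; @Ordinal 4 2 isT; @Ordinal 4 3 isT].
Definition tab : seq nat := [:: 0;1;2;0;1;2;0;1;2;3].
Definition succ5 (v : 'I_5) : 'I_5 := nth o5 enum5 (v.+1 %% 5).
Definition cc (v : 'I_5) (e : {set 'I_5}) : 'I_4 :=
  nth o4 col4 (nth 0 tab (v * 2 + (succ5 v \in e))).

Lemma incE v e : incidence C5 v e -> exists a b, [/\ C5 a b, e = [set a; b] & (v == a) || (v == b)].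
Proof.
case/andP=> /existsP[a /existsP[b /andP[Cab /eqP E]]] Hv; exists a, b; split=> //.
by rewrite -in_set2 -E.
Qed.

Lemma colP : incidence_coloring C5 cc.
Proof.
move=> v e u f /incE[a [b [Cab -> Hv]]] /incE[a' [b' [Cab' -> Hu]]].
rewrite /inc_adj /cc xpair_eqE !eqs2 !in_set2 negb_and.
move: u Hu. move: a' b' Cab'. move: v Hv. move: a b Cab.
Ltac c5 := case=> [[|[|[|[|[|?]]]]] ?] //=.
Ltac hy := let H := fresh in move=> H; try discriminate H; clear H.
(c5; c5; hy; c5; hy; c5; c5; hy; c5; hy; vm_compute; intros; try discriminate; reflexivity).
Qed.

Lemma S0E v x : x \in S0 C5 cc v -> exists a b, [/\ C5 a b, (v==a)||(v==b) & x = cc v [set a;b]].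
Proof.
case/imsetP=> e; rewrite inE => /incE[a [b [Cab -> Hv]]] ->.
by exists a, b.
Qed.

Lemma adjP : adjustable C5 cc.
Proof.
exists (@Ordinal 4 0 isT), (@Ordinal 4 3 isT); split => // v.
apply/negP => /andP[/S0E[a [b [Cab Hv E]]] /S0E[a' [b' [Cab' Hv' E']]]].
move: E E'; rewrite /cc !in_set2.
move: a' b' Cab' Hv'. move: v Hv. move: a b Cab.
(c5; c5; hy; c5; hy; c5; c5; hy; hy; vm_compute; intros; try discriminate).
Qed.

Lemma md : maxdeg C5 = 2.
Proof.
rewrite /maxdeg.
have E : forall v : 'I_5, #|[set u | C5 v u]| = 2.
  move=> v; have -> : [set u | C5 v u] = [set nth o5 enum5 ((v+1)%%5); nth o5 enum5 ((v+4)%%5)].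
    apply/setP => u; rewrite inE in_set2; move: u v.
    by do 2 (case=> [[|[|[|[|[|?]]]]] ?] //=).
  rewrite cards2. by move: v; case=> [[|[|[|[|[|?]]]]] ?] //=.
rewrite (eq_bigr (fun _ => 2)) ?big_const_ord //.
Qed.

Ltac c3 := case=> [[|[|[|?]]] ?] //=.

Lemma noLIH : ~ (exists f : 'I_5 -> 'I_3, loc_inj_hom C5 K3loop f).
Proof.
case=> f [hom inj].
pose a0 : 'I_5 := @Ordinal 5 0 isT. pose a1 : 'I_5 := @Ordinal 5 1 isT.
pose a2 : 'I_5 := @Ordinal 5 2 isT. pose a3 : 'I_5 := @Ordinal 5 3 isT.
pose a4 : 'I_5 := @Ordinal 5 4 isT.
have h01 := hom a0 a1 isT. have h12 := hom a1 a2 isT. have h23 := hom a2 a3 isT.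
have h34 := hom a3 a4 isT. have h40 := hom a4 a0 isT.
have ni : forall v u w : 'I_5, C5 v u -> C5 v w -> u != w -> f u != f w.
  move=> v u w Hu Hw; apply: contra_neq => E; exact: (inj v u w Hu Hw E).
have i0 := ni a0 a4 a1 isT isT isT. have i1 := ni a1 a0 a2 isT isT isT.
have i2 := ni a2 a1 a3 isT isT isT. have i3 := ni a3 a2 a4 isT isT isT.
have i4 := ni a4 a3 a0 isT isT isT.
move: h01 h12 h23 h34 h40 i0 i1 i2 i3 i4.
move: (f a0) (f a1) (f a2) (f a3) (f a4).
by do 5 c3.
Qed.

Theorem mainTheorem11 :
  two_adjustable C5 /\ ~ (exists f : 'I_5 -> 'I_3, loc_inj_hom C5 K3loop f).
Proof.
split; last exact: noLIH.
rewrite /two_adjustable md.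
exists cc. split. exact: colP. exact: adjP.
Qed.
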